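(* Let $(S,<_S)$ be an order. The following are equivalent: (1) $(S,<_S)$ does not embed $R_{2,2}$; (2) for every $x,x'\in S$ the sets $u(x),u(x')$ are $\subseteq$-comparable; (3) for every $x,x'\in S$ the sets $d(x),d(x')$ are $\subseteq$-comparable.
   Context: An order $(S,<_S)$ is a set with a strict partial order (antisymmetric, transitive). An embedding of $(S,<_S)$ into $(R,<_R)$ is an injection $\pi$ with $x<_S y\iff\pi(x)<_R\pi(y)$. $R_{2,2}$ is the order on four elements $\{x_0,x_1,y_0,y_1\}$ whose only relations are $x_0<y_0$ and $x_1<y_1$. For $x\in S$: $d(x)=\{z\in S\mid z<_S x\}$ and $u(x)=\{z\in S\mid x<_S z\}$. *)

(* Defs.v *)
Definition strict_order {S : Type} (lt : S -> S -> Prop) : Prop :=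
  (forall x, ~ lt x x) /\ (forall x y z, lt x y -> lt y z -> lt x z).

Definition embedding {S R : Type} (ltS : S -> S -> Prop) (ltR : R -> R -> Prop)
  (pi : S -> R) : Prop :=
  (forall x y, pi x = pi y -> x = y) /\
  (forall x y, ltS x y <-> ltR (pi x) (pi y)).

Definition embeds {S R : Type} (ltS : S -> S -> Prop) (ltR : R -> R -> Prop) : Prop :=
  exists pi : S -> R, embedding ltS ltR pi.

Inductive R22 : Type := x0 | x1 | y0 | y1.

Definition R22_lt (a b : R22) : Prop :=
  (a = x0 /\ b = y0) \/ (a = x1 /\ b = y1).

Definition dset {S : Type} (lt : S -> S -> Prop) (x : S) : S -> Prop := fun z => lt z x.
Definition uset {S : Type} (lt : S -> S -> Prop) (x : S) : S -> Prop := fun z => lt x z.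

Definition subset {S : Type} (A B : S -> Prop) : Prop := forall z, A z -> B z.

Definition comparable_sets {S : Type} (A B : S -> Prop) : Prop :=
  subset A B \/ subset B A.

(* Main.v *)
Require Import Defs.
From Stdlib Require Import Classical.

Lemma no_embed_u (S : Type) (ltS : S -> S -> Prop) (Hord : strict_order ltS) :
  ~ embeds R22_lt ltS -> forall x x' : S, comparable_sets (uset ltS x) (uset ltS x').
Proof.
  destruct Hord as [Hirr Htr]. intros Hne x x'.
  unfold comparable_sets, subset, uset.
  apply NNPP; intro Hc. apply not_or_and in Hc. destruct Hc as [C1 C2].
  apply not_all_ex_not in C1. destruct C1 as [a Ha].
  apply not_all_ex_not in C2. destruct C2 as [b Hb].
  apply imply_to_and in Ha. apply imply_to_and in Hb.
  destruct Ha as [xa nxa]. destruct Hb as [xb nxb].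
  apply Hne.
  assert (n1 : ~ ltS x x') by (intro h; eauto).
  assert (n2 : ~ ltS x' x) by (intro h; eauto).
  assert (n3 : ~ ltS a x) by (intro h; eapply Hirr; eauto).
  assert (n4 : ~ ltS b x') by (intro h; eapply Hirr; eauto).
  assert (n5 : ~ ltS b x) by (intro h; eauto).
  assert (n6 : ~ ltS a x') by (intro h; eauto).
  assert (n7 : ~ ltS a b) by (intro h; eauto).
  assert (n8 : ~ ltS b a) by (intro h; eauto).
  assert (e1 : x <> x') by (intro h; subst; tauto).
  assert (e2 : x <> a) by (intro h; subst; eapply Hirr; eauto).
  assert (e3 : x' <> b) by (intro h; subst; eapply Hirr; eauto).
  assert (e4 : x <> b) by (intro h; subst; eauto).
  assert (e5 : x' <> a) by (intro h; subst; eauto).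
  assert (e6 : a <> b) by (intro h; subst; eauto).
  exists (fun p => match p with x0 => x | x1 => x' | y0 => a | y1 => b end).
  split.
  - intros p q; destruct p, q; simpl; intro h; try reflexivity; exfalso; congruence.
  - intros p q; destruct p, q; simpl; unfold R22_lt; split; intro h;
      first [ left; split; reflexivity | right; split; reflexivity
            | assumption
            | exfalso; destruct h as [[h1 h2]|[h1 h2]]; discriminate
            | exfalso; eapply Hirr; exact h
            | exfalso; auto ].
Qed.

Lemma u_no_embed (S : Type) (ltS : S -> S -> Prop) :
  (forall x x' : S, comparable_sets (uset ltS x) (uset ltS x')) -> ~ embeds R22_lt ltS.
Proof.
  intros H [pi [Hinj Hlt]].
  destruct (H (pi x0) (pi x1)) as [C|C]; unfold subset, uset in C.
  - assert (h : ltS (pi x1) (pi y0)) by (apply C; apply Hlt; left; auto).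
    apply Hlt in h. destruct h as [[h1 h2]|[h1 h2]]; discriminate.
  - assert (h : ltS (pi x0) (pi y1)) by (apply C; apply Hlt; right; auto).
    apply Hlt in h. destruct h as [[h1 h2]|[h1 h2]]; discriminate.
Qed.

Lemma u_to_d (S : Type) (ltS : S -> S -> Prop) :
  (forall x x' : S, comparable_sets (uset ltS x) (uset ltS x')) ->
  (forall x x' : S, comparable_sets (dset ltS x) (dset ltS x')).
Proof.
  intros H x x'. unfold comparable_sets, subset, dset.
  apply NNPP; intro Hc. apply not_or_and in Hc. destruct Hc as [C1 C2].
  apply not_all_ex_not in C1. destruct C1 as [a Ha].
  apply not_all_ex_not in C2. destruct C2 as [b Hb].
  apply imply_to_and in Ha. apply imply_to_and in Hb.
  destruct Ha as [xa nxa]. destruct Hb as [xb nxb].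
  destruct (H a b) as [C|C]; unfold subset, uset in C; eauto.
Qed.

Lemma d_to_u (S : Type) (ltS : S -> S -> Prop) :
  (forall x x' : S, comparable_sets (dset ltS x) (dset ltS x')) ->
  (forall x x' : S, comparable_sets (uset ltS x) (uset ltS x')).
Proof.
  intros H x x'. unfold comparable_sets, subset, uset.
  apply NNPP; intro Hc. apply not_or_and in Hc. destruct Hc as [C1 C2].
  apply not_all_ex_not in C1. destruct C1 as [a Ha].
  apply not_all_ex_not in C2. destruct C2 as [b Hb].
  apply imply_to_and in Ha. apply imply_to_and in Hb.
  destruct Ha as [xa nxa]. destruct Hb as [xb nxb].
  destruct (H a b) as [C|C]; unfold subset, dset in C; eauto.
Qed.

Theorem lemma2p4 (S : Type) (ltS : S -> S -> Prop) (Hord : strict_order ltS) :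
  (~ embeds R22_lt ltS <->
     (forall x x' : S, comparable_sets (uset ltS x) (uset ltS x'))) /\
  ((forall x x' : S, comparable_sets (uset ltS x) (uset ltS x')) <->
     (forall x x' : S, comparable_sets (dset ltS x) (dset ltS x'))).
Proof.
  split; split.
  - apply no_embed_u; exact Hord.
  - apply u_no_embed.
  - apply u_to_d.
  - apply d_to_u.
Qed.
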